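(* Let $\boldsymbol{\omega}\in\mathbb{R}^d$ satisfy $|\boldsymbol{\omega}\cdot\boldsymbol{\nu}|>\gamma_0|\boldsymbol{\nu}|^{-\tau}$ for all $\boldsymbol{\nu}\in\mathbb{Z}^d\setminus\{\boldsymbol{0}\}$, with $\gamma_0>0$, $\tau>d-1$, and let $\gamma$ be a constant with $0<\gamma<\min\big\{|\omega_1|,\ldots,|\omega_d|,\ \min_{1\le i<j\le d}\big||\omega_i|-|\omega_j|\big|\big\}$. Let $p\ge2$, $\boldsymbol{\nu}_1,\ldots,\boldsymbol{\nu}_p\in\mathbb{Z}^d$ and $j_1,\ldots,j_p\in\{1,\ldots,d\}$ be such that $|\boldsymbol{\nu}_i-\boldsymbol{\nu}_{i-1}|\le2$ and $\delta_{j_i}(\boldsymbol{\omega}\cdot\boldsymbol{\nu}_i)=\delta_{j_1}(\boldsymbol{\omega}\cdot\boldsymbol{\nu}_1)\le\gamma$ for $i=2,\ldots,p$. Then $|\boldsymbol{\nu}_1-\boldsymbol{\nu}_p|\le2$.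
   Context: $|\boldsymbol{\nu}|=|\nu_1|+\cdots+|\nu_d|$; $\boldsymbol{e}_j$ is the $j$-th standard basis vector. For $j\in\{1,\ldots,d\}$ and $\boldsymbol{\nu}\in\mathbb{Z}^d$, $\delta_j(\boldsymbol{\omega}\cdot\boldsymbol{\nu}):=\min\{|\boldsymbol{\omega}\cdot\boldsymbol{\nu}-\omega_j|,|\boldsymbol{\omega}\cdot\boldsymbol{\nu}+\omega_j|\}$. *)

(* Defs.v *)
From HB Require Import structures.
From mathcomp Require Import all_boot all_order all_algebra.
From mathcomp Require Import all_classical all_reals all_analysis.
Set Implicit Arguments. Unset Strict Implicit. Unset Printing Implicit Defensive.
Import Order.TTheory GRing.Theory Num.Theory.
Local Open Scope ring_scope.

(* Vectors of R^d and Z^d are functions on the index set 'I_d = {0,...,d-1}. *)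

Definition norm1 (d : nat) (nu : 'I_d -> int) : nat := (\sum_(k < d) `|nu k|)%N.

Definition dotZ (R : realType) (d : nat) (om : 'I_d -> R) (nu : 'I_d -> int) : R :=
  \sum_(k < d) om k * (nu k)%:~R.

Definition delta (R : realType) (d : nat) (om : 'I_d -> R) (j : 'I_d) (x : R) : R :=
  Num.min `|x - om j| `|x + om j|.

Definition subZ (d : nat) (nu1 nu2 : 'I_d -> int) : 'I_d -> int :=
  fun k => nu1 k - nu2 k.

(* Main.v *)
Require Import Defs.
From HB Require Import structures.
From mathcomp Require Import all_boot all_order all_algebra.
From mathcomp Require Import all_classical all_reals all_analysis.
From mathcomp Require Import zify lra.
Import Order.TTheory GRing.Theory Num.Theory.
Local Open Scope ring_scope.

Definition ev {d : nat} (s : int) (j : 'I_d) : 'I_d -> int :=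
  fun k => if k == j then s else 0.

Lemma norm1_ev d (s : int) (j : 'I_d) : (s = 1 \/ s = -1) -> norm1 (ev s j) = 1%N.
Proof.
move=> hs; rewrite /norm1 (bigD1 j) //= big1 => [|k hk]; rewrite /ev.
  by rewrite eqxx; case: hs => ->.
by rewrite (negbTE hk).
Qed.

Lemma dot_ev (R : realType) d (om : 'I_d -> R) s j : dotZ om (ev s j) = om j * s%:~R.
Proof.
rewrite /dotZ (bigD1 j) //= big1 => [|k hk]; rewrite /ev.
  by rewrite eqxx addr0.
by rewrite (negbTE hk) mulr0.
Qed.

Lemma dotB (R : realType) d (om : 'I_d -> R) (u v : 'I_d -> int) :
  dotZ om (fun k => u k - v k) = dotZ om u - dotZ om v.
Proof.
rewrite /dotZ -sumrB; apply: eq_bigr => k _.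
by rewrite intrB mulrBr.
Qed.

Lemma norm1_le4 d (x a b e1 e2 : 'I_d -> int) :
  (forall k, x k = a k - b k + e1 k - e2 k) ->
  (norm1 x <= norm1 a + norm1 b + norm1 e1 + norm1 e2)%N.
Proof.
move=> hx; rewrite /norm1 -!big_split /=; apply: leq_sum => k _.
rewrite hx; lia.
Qed.

Lemma norm1_mul2 d (c : 'I_d -> int) : norm1 (fun k => c k * 2) = (norm1 c * 2)%N.
Proof.
rewrite /norm1 big_distrl /=; apply: eq_bigr => k _; lia.
Qed.

Lemma lemA (R : realType) d (om : 'I_d -> R) (P : pred 'I_d) (c : 'I_d -> int) :
  (\sum_(m | P m) `|c m| <= 1)%N ->
  \sum_(m | P m) om m * (c m)%:~R = 0 \/
  exists l, P l /\ (\sum_(m | P m) om m * (c m)%:~R = om l \/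
                    \sum_(m | P m) om m * (c m)%:~R = - om l).
Proof.
case: (pickP (fun m => P m && (c m != 0))) => [l /andP [Pl cl]|hn] hs.
  right; exists l; split => //.
  move: hs; rewrite (bigD1 l) //= => hs.
  have g1 : (0 < `|c l|)%N by rewrite absz_gt0.
  have hr : (\sum_(i | P i && (i != l)) `|c i| == 0)%N.
    move: hs g1; set S := (\sum_(i | _) _)%N; lia.
  move: hr; rewrite sum_nat_eq0 => /forallP hr.
  rewrite (bigD1 l) //= big1 ?addr0 => [|k hk]; last first.
    by move: (hr k); rewrite hk /= => /eqP h; rewrite (_ : c k = 0) ?mulr0 //; lia.
  have : c l = 1 \/ c l = -1.
    move: hs g1 hr; set S := (\sum_(i | _) _)%N; lia.
  by case=> ->; [left; rewrite mulr1 | right; rewrite mulrN1].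
left; apply: big1 => k Pk; move: (hn k); rewrite Pk /= => /negbFE/eqP ->.
by rewrite mulr0.
Qed.

Lemma lemA0 (R : realType) d (om : 'I_d -> R) (P : pred 'I_d) (c : 'I_d -> int) :
  (\sum_(m | P m) `|c m| = 0)%N ->
  \sum_(m | P m) om m * (c m)%:~R = 0.
Proof.
move/eqP; rewrite sum_nat_eq0 => /forallP hr.
apply: big1 => k Pk; move: (hr k); rewrite Pk /= => /eqP h.
by rewrite (_ : c k = 0) ?mulr0 //; lia.
Qed.

Lemma pm_bound (R : realType) (a b : R) (x y : int) :
  (x = 1 \/ x = -1) -> (y = 1 \/ y = -1) ->
  `| `|a| - `|b| | <= `| a * x%:~R + b * y%:~R |.
Proof.
move=> hx hy.
have -> : a * x%:~R + b * y%:~R = a * x%:~R - (- (b * y%:~R)) by rewrite opprK.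
apply: le_trans (ler_dist_dist _ _).
by case: hx => ->; case: hy => ->; rewrite ?mulr1 ?mulrN1 ?normrN.
Qed.

Lemma lemB (R : realType) d (om : 'I_d -> R) (gamma : R) (hgpos : 0 < gamma)
  (hgom : forall i : 'I_d, gamma < `|om i|)
  (hgdiff : forall i j : 'I_d, (i < j)%N -> gamma < `| `|om i| - `|om j| |)
  (c : 'I_d -> int) : (norm1 c <= 2)%N -> `|dotZ om c| <= gamma ->
  forall k, c k = 0.
Proof.
move=> hn hd k; apply/eqP; apply/negPn/negP => ck.
move: hn hd; rewrite /norm1 /dotZ (bigD1 k) //= (bigD1 k (P:=xpredT)) //= => hn hd.
have [h2|h1] := leqP 2 `|c k|.
  have h0 : (\sum_(i < d | i != k) `|c i| = 0)%N.
    move: hn h2; set S := (\sum_(i < d | _) _)%N; lia.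
  move: hd; rewrite (@lemA0 _ _ om _ _ h0) addr0.
  have : c k = 2 \/ c k = -2 by lia.
  case=> ->; rewrite normrM ?intrN ?normrN normr_nat => hd.
    have := hgom k; lra.
  have := hgom k; lra.
have g1 : (0 < `|c k|)%N by rewrite absz_gt0.
have hs : (\sum_(i < d | i != k) `|c i| <= 1)%N.
  move: hn h1; set S := (\sum_(i < d | _) _)%N; lia.
have hx : c k = 1 \/ c k = -1 by lia.
case: (@lemA _ _ om _ _ hs) => [h0|[l [lk [h0 | h0]]]]; rewrite h0 in hd.
  move: hd; rewrite addr0.
  by case: hx => ->; rewrite ?mulr1 ?mulrN1 ?normrN => hd; have := hgom k; lra.
- have hl : gamma < `| `|om k| - `|om l| |.
    case: (ltngtP k l) => [hkl|hlk|hkl]; first exact: hgdiff.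
    + by rewrite distrC; apply: hgdiff.
    + by move: lk; rewrite (val_inj hkl) eqxx.
  have := @pm_bound _ (om k) (om l) _ 1 hx (or_introl erefl).
  rewrite mulr1 => h; lra.
- have hl : gamma < `| `|om k| - `|om l| |.
    case: (ltngtP k l) => [hkl|hlk|hkl]; first exact: hgdiff.
    + by rewrite distrC; apply: hgdiff.
    + by move: lk; rewrite (val_inj hkl) eqxx.
  have := @pm_bound _ (om k) (om l) _ (-1) hx (or_intror erefl).
  rewrite mulrN1 => h; lra.
Qed.

Lemma norm_eq_cases (R : realType) (a b : R) : `|a| = `|b| -> a = b \/ a = - b.
Proof.
case: (lerP 0 a) => ha; case: (lerP 0 b) => hb;
  rewrite ?(ger0_norm ha) ?(ltr0_norm ha) ?(ger0_norm hb) ?(ltr0_norm hb) => h; lra.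
Qed.

Lemma dotN (R : realType) d (om : 'I_d -> R) (u : 'I_d -> int) :
  dotZ om (fun k => - u k) = - dotZ om u.
Proof.
rewrite /dotZ -sumrN; apply: eq_bigr => k _.
by rewrite intrN mulrN.
Qed.

Lemma norm1_le2 d (x a b : 'I_d -> int) :
  (forall k, x k = a k - b k) -> (norm1 x <= norm1 a + norm1 b)%N.
Proof.
move=> hx; rewrite /norm1 -!big_split /=; apply: leq_sum => k _.
rewrite hx; lia.
Qed.

Lemma norm1_le3 d (x a b e : 'I_d -> int) :
  (forall k, x k = a k - b k - e k) -> (norm1 x <= norm1 a + norm1 b + norm1 e)%N.
Proof.
move=> hx; rewrite /norm1 -!big_split /=; apply: leq_sum => k _.
rewrite hx; lia.
Qed.

Theorem lemma3p4 (R : realType) (d : nat) (om : 'I_d -> R) (gamma0 tau gamma : R)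
  (hgamma0 : 0 < gamma0) (htau : d%:R - 1 < tau)
  (hdio : forall nu : 'I_d -> int, (exists k, nu k != 0) ->
            gamma0 * (norm1 nu)%:R `^ (- tau) < `|dotZ om nu|)
  (hgpos : 0 < gamma)
  (hgom : forall i : 'I_d, gamma < `|om i|)
  (hgdiff : forall i j : 'I_d, (i < j)%N -> gamma < `| `|om i| - `|om j| |)
  (p : nat) (hp : (2 <= p)%N)
  (nu : nat -> 'I_d -> int) (j : nat -> 'I_d)
  (hstep : forall i : nat, (2 <= i <= p)%N -> (norm1 (subZ (nu i) (nu i.-1)) <= 2)%N)
  (hdelta : forall i : nat, (2 <= i <= p)%N ->
     delta om (j i) (dotZ om (nu i)) = delta om (j 1%N) (dotZ om (nu 1%N)))
  (hsmall : delta om (j 1%N) (dotZ om (nu 1%N)) <= gamma) :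
  (norm1 (subZ (nu 1%N) (nu p)) <= 2)%N.
Proof.
set dl := delta om (j 1%N) (dotZ om (nu 1%N)) in hdelta hsmall.
have inj : forall w : 'I_d -> int, dotZ om w = 0 -> forall k, w k = 0.
  move=> w hw k; apply/eqP; apply/negPn/negP => wk.
  have := hdio w (ex_intro _ k wk); rewrite hw normr0.
  have := powR_ge0 (norm1 w)%:R (- tau).
  move=> h1 h2; have : 0 <= gamma0 * (norm1 w)%:R `^ (- tau) by apply: mulr_ge0 => //; lra.
  lra.
have F : forall i, (1 <= i <= p)%N -> exists s : int, (s = 1 \/ s = -1) /\
    `|dotZ om (fun k => nu i k - ev s (j i) k)| = dl.
  move=> i /andP [i1 ip].
  have hd : delta om (j i) (dotZ om (nu i)) = dl.
    case: (ltngtP i 1) => [|hi|->] //; first by case: i i1 {ip}.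
    by apply: hdelta; rewrite hi.
  move: hd; rewrite /delta.
  case: (lerP `|dotZ om (nu i) - om (j i)| `|dotZ om (nu i) + om (j i)|) => h.
    move=> <-; exists 1; split; first by left.
    by rewrite dotB dot_ev mulr1.
  move=> <-; exists (-1); split; first by right.
  by rewrite dotB dot_ev mulrN1 opprK.
have [s1 [hs1 hc]] := F 1%N ltac:(by rewrite leqnn /=; lia).
set c := fun k => nu 1%N k - ev s1 (j 1%N) k in hc.
have G : forall u : 'I_d -> int, `|dotZ om u| = dl ->
    (forall k, u k = c k) \/ (forall k, u k = - c k).
  move=> u hu; case: (@norm_eq_cases _ (dotZ om u) (dotZ om c)); first by rewrite hu hc.
    move=> h; left => k; have := inj (fun k => u k - c k); rewrite dotB h subrr => /(_ erefl k).
    lia.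
  move=> h; right => k; have := inj (fun k => u k - - c k); rewrite dotB dotN h subrr => /(_ erefl k).
  lia.
have Q : forall i, (1 <= i <= p)%N -> exists s : int, (s = 1 \/ s = -1) /\
    forall k, nu i k = ev s (j i) k + c k.
  elim=> [//|i IH] /andP [i1 ip].
  case: (posnP i) => [-> | ipos].
    exists s1; split => // k; rewrite /c; lia.
  have [s' [hs' hi]] := IH ltac:(apply/andP; split; lia).
  have [s [hs hu]] := F i.+1 ltac:(apply/andP; split; lia).
  exists s; split => //.
  case: (G _ hu) => hk k; first by have := hk k; lia.
  have cz : forall k, c k = 0.
    apply: (@lemB _ _ om gamma hgpos hgom hgdiff); last by rewrite hc.
    have h2 := hstep i.+1 ltac:(apply/andP; split; lia).
    have h4 := @norm1_le3 d (fun k => c k * 2) (ev s (j i.+1)) (subZ (nu i.+1) (nu i)) (ev s' (j i)).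
    have := h4 ltac:(move=> k'; rewrite /subZ; have := hk k'; have := hi k'; lia).
    rewrite norm1_mul2 !norm1_ev //= in h2 *; lia.
  by have := hk k; have := cz k; lia.
have [sa [hsa ha]] := Q 1%N ltac:(apply/andP; split; lia).
have [sb [hsb hb]] := Q p ltac:(apply/andP; split; lia).
have := @norm1_le2 d (subZ (nu 1%N) (nu p)) (ev sa (j 1%N)) (ev sb (j p)).
rewrite !norm1_ev //; apply => k; rewrite /subZ ha hb; lia.
Qed.
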